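(* Let $H$ be a real Hilbert space, $A:H\to 2^H$ a maximally monotone operator, and $(\gamma_n)$ a sequence of positive reals. Then the family $(J_{\gamma_nA})_{n\in\mathbb{N}}$ is jointly firmly nonexpansive with respect to $(\gamma_n)$.
   Context: For $\gamma>0$, $J_{\gamma A}:=(id_H+\gamma A)^{-1}$, which is single-valued and defined on all of $H$. $(T_n)$ is jointly firmly nonexpansive w.r.t. $(\gamma_n)$ if for all $n,m\in\mathbb{N}$, $x,y\in H$, $\alpha,\beta\in[0,1]$ with $(1-\alpha)\gamma_n=(1-\beta)\gamma_m$: $\|T_nx-T_my\|\le\|((1-\alpha)x+\alpha T_nx)-((1-\beta)y+\beta T_my)\|$. *)

(* Defs.v *)
From HB Require Import structures.
From mathcomp Require Import all_boot all_order all_algebra.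
From mathcomp Require Import all_classical all_reals topology normedtype.
Set Implicit Arguments. Unset Strict Implicit. Unset Printing Implicit Defensive.
Import Order.TTheory GRing.Theory Num.Theory.
Import numFieldNormedType.Exports.
Local Open Scope classical_set_scope.
Local Open Scope ring_scope.

Definition is_hilbert_inner (R : realType) (H : completeNormedModType R)
  (ip : H -> H -> R) : Prop :=
  [/\ (forall x y, ip x y = ip y x),
      (forall a x y z, ip (a *: x + y) z = a * ip x z + ip y z),
      (forall x, 0 <= ip x x),
      (forall x, ip x x = 0 -> x = 0)
    & (forall x, `|x| ^+ 2 = ip x x)].

(* set-valued operators A : H -> 2^H are relations: A x is the set of values *)
Definition monotone_op (R : realType) (H : completeNormedModType R)
  (ip : H -> H -> R) (A : H -> set H) : Prop :=
  forall x y u v, A x u -> A y v -> 0 <= ip (x - y) (u - v).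

Definition maximally_monotone (R : realType) (H : completeNormedModType R)
  (ip : H -> H -> R) (A : H -> set H) : Prop :=
  monotone_op ip A /\
  forall B : H -> set H, monotone_op ip B ->
    (forall x u, A x u -> B x u) -> B = A.

(* resolvent J_{gamma A} = (id + gamma A)^{-1}, as a set-valued map:
   p \in J x  iff  x \in p + gamma A p *)
Definition resolvent (R : realType) (H : completeNormedModType R)
  (gamma : R) (A : H -> set H) : H -> set H :=
  fun x => [set p | exists a, A p a /\ x = p + gamma *: a].

Definition jointly_firmly_nonexpansive (R : realType) (H : completeNormedModType R)
  (T : nat -> H -> H) (gamma : nat -> R) : Prop :=
  forall (n m : nat) (x y : H) (alpha beta : R),
    0 <= alpha <= 1 -> 0 <= beta <= 1 ->
    (1 - alpha) * gamma n = (1 - beta) * gamma m ->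
    `|T n x - T m y| <=
      `|((1 - alpha) *: x + alpha *: T n x) - ((1 - beta) *: y + beta *: T m y)|.

(* Main.v *)
Require Import Defs.
From HB Require Import structures.
From mathcomp Require Import all_boot all_order all_algebra.
From mathcomp Require Import all_classical all_reals topology normedtype.
From mathcomp Require Import ring lra.
Import Order.TTheory GRing.Theory Num.Theory.
Import numFieldNormedType.Exports.
Local Open Scope classical_set_scope.
Local Open Scope ring_scope.

Theorem proposition3p21 (R : realType) (H : completeNormedModType R)
  (ip : H -> H -> R) (Hip : is_hilbert_inner ip)
  (A : H -> set H) (HA : maximally_monotone ip A)
  (gamma : nat -> R) (Hgamma : forall n, 0 < gamma n)
  (J : nat -> H -> H)
  (HJ : forall n x, resolvent (gamma n) A x (J n x)) :
  jointly_firmly_nonexpansive J gamma.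
Proof.
case: Hip => Hsym Hlin Hpos _ Hnorm.
case: HA => Hmon _.
move=> n m x y al be /andP[al0 al1] /andP[be0 be1] Hc.
have [a [Aa Ex]] := HJ n x.
have [b [Ab Ey]] := HJ m y.
set p := J n x in Ex Aa *.
set q := J m y in Ey Ab *.
set c := (1 - al) * gamma n.
have c0 : 0 <= c by apply: mulr_ge0; [lra | exact: ltW].
have E1 : (1 - al) *: x + al *: p = p + c *: a.
  by rewrite Ex scalerDr scalerA addrAC -scalerDl subrK scale1r.
have E2 : (1 - be) *: y + be *: q = q + c *: b.
  by rewrite Ey scalerDr scalerA addrAC -scalerDl subrK scale1r /c Hc.
rewrite E1 E2.
have -> : p + c *: a - (q + c *: b) = (p - q) + c *: (a - b).
  by rewrite scalerBr opprD addrACA.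
set d := p - q. set e := a - b.
have mde : 0 <= ip d e by exact: Hmon.
have Hee : 0 <= ip e e by exact: Hpos.
have key : ip (d + c *: e) (d + c *: e) = c * (c * ip e e + ip d e) + c * ip d e + ip d d.
  rewrite addrC Hlin (Hsym e) Hlin (Hsym d (c *: e + d)) Hlin (Hsym e d).
  ring.
rewrite -(@ler_pXn2r _ 2%N) ?inE ?normr_ge0 //.
have h1 := Hnorm d. have h2 := Hnorm (d + c *: e).
have : 0 <= c * (c * ip e e + ip d e) by apply: mulr_ge0 => //; apply: addr_ge0 => //; exact: mulr_ge0.
have : 0 <= c * ip d e by exact: mulr_ge0.
rewrite h1 h2 key.
lra.
all: rewrite qualifE /=; exact: normr_ge0.
Qed.
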